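(* The set $X^{\mathcal B}=\{x^{\mathbf b}:\mathbf b\in\mathcal B\}$ is a basis of the $\mathbb C$-vector space $\mathcal W_0$.
   Context: Let $A=\{\mathbf a_1,\dots,\mathbf a_m\}\subseteq\mathbb Z^n$ be linearly independent over $\mathbb R$ and $\ell_1,\dots,\ell_m$ positive integers (part of a relation $\ell_0\mathbf a_0=\sum_j\ell_j\mathbf a_j$, $\ell_0=\sum_j\ell_j$, $\mathbf a_0\in\mathbb Z^n$, $\gcd(\ell_0,\dots,\ell_m)=1$). Let $f_0=\sum_{j=1}^m\ell_jx^{\mathbf a_j}$. Let $V$ be the real span of $A$, $V_{\mathbb Z}=V\cap\mathbb Z^n$, $C(A)$ the real cone generated by $A$, $M=V_{\mathbb Z}\cap C(A)$. Let $S_0$ be the $\mathbb C$-span of $\{x^u:u\in M\}$, $D_{i,0}=x_i\partial/\partial x_i+x_i\partial f_0/\partial x_i$ ($i=1,\dots,n$), and $\mathcal W_0=S_0/\sum_iD_{i,0}S_0$. Let $P(A)=\{\sum_jc_j\mathbf a_j:0\le c_j<1\}$ and $\mathcal B=V_{\mathbb Z}\cap P(A)$. *)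

(* Defs.v *)
From HB Require Import structures.
From mathcomp Require Import all_boot all_order all_algebra.
From mathcomp Require Import reals.
From mathcomp.real_closed Require Export complex.
Set Implicit Arguments. Unset Strict Implicit. Unset Printing Implicit Defensive.
Import Order.TTheory GRing.Theory Num.Theory.
Local Open Scope ring_scope.

Definition Zn (n : nat) := 'rV[int]_n.

(* A Laurent polynomial in x_1..x_n with coefficients in C is a finitely
   supported coefficient function Z^n -> C  (g <-> sum_u g u x^u). *)
Definition fin_supp (C : Type) (n : nat) (zero : C) (eqC : C -> C -> bool)
  (g : Zn n -> C) : Prop :=
  exists s : seq (Zn n), forall u, ~~ eqC (g u) zero -> u \in s.

Section Defs.
Variable R : realType.
Local Notation C := (complex R).
Variables (n m : nat) (a : 'I_m -> Zn n) (l : 'I_m -> nat).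

Definition toR (u : Zn n) : 'rV[R]_n := map_mx (fun z : int => z%:~R) u.

Definition lin_indep_R : bool := row_free (\matrix_(j < m) toR (a j)).

Definition rcomb (c : 'I_m -> R) : 'rV[R]_n := \sum_(j < m) c j *: toR (a j).

Definition in_VZ (u : Zn n) : Prop := exists c, toR u = rcomb c.
Definition in_cone (v : 'rV[R]_n) : Prop :=
  exists c, (forall j, 0 <= c j) /\ v = rcomb c.
Definition in_M (u : Zn n) : Prop := in_VZ u /\ in_cone (toR u).
Definition in_PA (v : 'rV[R]_n) : Prop :=
  exists c, (forall j, 0 <= c j < 1) /\ v = rcomb c.
Definition in_B (u : Zn n) : Prop := in_VZ u /\ in_PA (toR u).

Definition laurent := Zn n -> C.
Definition finsupp (g : laurent) : Prop := fin_supp 0 (fun x y => x == y) g.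

Definition monom (b : Zn n) : laurent := fun u => if u == b then 1 else 0.

Definition in_S0 (g : laurent) : Prop :=
  finsupp g /\ forall u, g u != 0 -> in_M u.

Definition mulmon (v : Zn n) (g : laurent) : laurent := fun u => g (u - v).
(* Euler operator x_i d/dx_i  (x_i d/dx_i x^u = u_i x^u) *)
Definition euler (i : 'I_n) (g : laurent) : laurent :=
  fun u => (u ord0 i)%:~R * g u.
(* x_i d f_0/d x_i = sum_j l_j (a_j)_i x^{a_j}, where f_0 = sum_j l_j x^{a_j} *)
(* D_{i,0} g = x_i dg/dx_i + (x_i df_0/dx_i) g *)
Definition D0 (i : 'I_n) (g : laurent) : laurent :=
  fun u => euler i g u +
    \sum_(j < m) ((l j)%:R * (a j ord0 i)%:~R) * mulmon (a j) g u.

Definition in_DS0 (h : laurent) : Prop :=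
  exists g : 'I_n -> laurent, (forall i, in_S0 (g i)) /\
    forall u, h u = \sum_(i < n) D0 i (g i) u.

Definition lincomb (s : seq (Zn n)) (c : Zn n -> C) : laurent :=
  fun u => \sum_(b <- s) c b * monom b u.

(* {x^b : b in B} is a basis of W_0 = S_0 / sum_i D_{i,0} S_0:
   the x^b lie in S_0, their classes span W_0, and they are linearly
   independent in W_0 (distinct b give linearly independent classes). *)
Definition XB_basis_of_W0 : Prop :=
  [/\ forall b, in_B b -> in_S0 (monom b),
      forall g, in_S0 g -> exists (s : seq (Zn n)) (c : Zn n -> C),
        (forall b, b \in s -> in_B b) /\ in_DS0 (fun u => g u - lincomb s c u)
    & forall (s : seq (Zn n)) (c : Zn n -> C), uniq s -> (forall b, b \in s -> in_B b) ->
        in_DS0 (lincomb s c) -> forall b, b \in s -> c b = 0].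
End Defs.

(* Main.v *)
Require Import Defs.
From HB Require Import structures.
From mathcomp Require Import all_boot all_order all_algebra.
From mathcomp Require Import reals.
From mathcomp.real_closed Require Import complex.
From mathcomp Require Import ring lra.
Set Implicit Arguments. Unset Strict Implicit. Unset Printing Implicit Defensive.
Import Order.TTheory GRing.Theory Num.Theory.
Local Open Scope ring_scope.

Section Main.
Variable R : realType.
Local Notation C := (complex R).
Variables (n m : nat) (a : 'I_m -> Zn n) (l : 'I_m -> nat).
Hypothesis hA : lin_indep_R R a.
Hypothesis hl : forall j, (0 < l j)%N.
Implicit Types u v w : Zn n.

Local Notation Am := (\matrix_(j < m) toR R (a j)).
Definition cc (u : Zn n) (j : 'I_m) : R := (toR R u *m pinvmx Am) 0 j.

Lemma rcombE (c : 'I_m -> R) : rcomb a c = (\row_j c j) *m Am.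
Proof.
rewrite mulmx_sum_row /rcomb; apply: eq_bigr => j _; by rewrite rowK mxE.
Qed.

Lemma rcomb_inj (c c' : 'I_m -> R) : rcomb a c = rcomb a c' -> forall j, c j = c' j.
Proof.
have hA' : row_free Am := hA.
rewrite !rcombE => /(row_free_inj hA') /rowP H j.
by have := H j; rewrite !mxE.
Qed.

Lemma cc_rcomb u (c : 'I_m -> R) : toR R u = rcomb a c -> forall j, cc u j = c j.
Proof.
move=> Hu; apply: rcomb_inj; rewrite -Hu rcombE.
have -> : \row_j (cc u j) = toR R u *m pinvmx Am.
  by apply/rowP => j; rewrite mxE.
by rewrite mulmxKpV // Hu rcombE submxMl.
Qed.

Lemma toRD u v : toR R (u + v) = toR R u + toR R v.
Proof. by apply/rowP => i; rewrite !mxE rmorphD. Qed.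
Lemma toRN u : toR R (- u) = - toR R u.
Proof. by apply/rowP => i; rewrite !mxE rmorphN. Qed.
Lemma toRB u v : toR R (u - v) = toR R u - toR R v.
Proof. by rewrite toRD toRN. Qed.
Lemma toR_inj : injective (toR R (n:=n)).
Proof.
move=> u v /rowP H; apply/rowP => i; have := H i; rewrite !mxE; exact: intr_inj.
Qed.

Lemma rcombD (c c' : 'I_m -> R) : rcomb a (fun j => c j + c' j) = rcomb a c + rcomb a c'.
Proof. by rewrite /rcomb -big_split; apply: eq_bigr => j _; rewrite scalerDl. Qed.
Lemma rcombN (c : 'I_m -> R) : rcomb a (fun j => - c j) = - rcomb a c.
Proof. by rewrite /rcomb -sumrN; apply: eq_bigr => j _; rewrite scaleNr. Qed.

Lemma toR_a k : toR R (a k) = rcomb a (fun j => (j == k)%:R).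
Proof.
rewrite /rcomb (bigD1 k) //= eqxx scale1r big1 ?addr0 // => j /negbTE ->.
by rewrite scale0r.
Qed.

Lemma cc_a k j : cc (a k) j = (j == k)%:R.
Proof. exact: cc_rcomb (toR_a k) j. Qed.

Lemma in_VZ_cc u : in_VZ R a u -> toR R u = rcomb a (cc u).
Proof.
case=> c Hc; rewrite Hc /rcomb; apply: eq_bigr => j _.
by rewrite (cc_rcomb Hc).
Qed.

Lemma in_M_ge0 u : in_M R a u -> forall j, 0 <= cc u j.
Proof. by case=> _ [c [Hc Hu]] j; rewrite (cc_rcomb Hu). Qed.


Implicit Types g h : laurent R n.

Lemma D0D i g g' u : D0 a l i (fun w => g w + g' w) u = D0 a l i g u + D0 a l i g' u.
Proof.
rewrite /D0 /euler /mulmon mulrDr addrACA -big_split /=; congr (_ + _).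
by apply: eq_bigr => j _; rewrite mulrDr.
Qed.

Lemma D0Z i (c : C) g u : D0 a l i (fun w => c * g w) u = c * D0 a l i g u.
Proof.
rewrite /D0 /euler /mulmon mulrDr mulr_sumr mulrCA; congr (_ + _).
by apply: eq_bigr => j _; rewrite mulrCA.
Qed.

Lemma D00 i u : D0 a l i (fun _ : Zn n => (0:C)) u = 0.
Proof.
rewrite /D0 /euler /mulmon mulr0 add0r big1 // => j _; by rewrite mulr0.
Qed.

Lemma finsupp0 : finsupp (fun _ : Zn n => (0 : C)).
Proof. by exists [::] => u; rewrite eqxx. Qed.

Lemma finsuppD g g' : finsupp g -> finsupp g' -> finsupp (fun w => g w + g' w).
Proof.
move=> [s Hs] [s' Hs']; exists (s ++ s') => u Hu; rewrite mem_cat.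
case: (eqVneq (g u) 0) => [H0|/Hs -> //]; apply/orP; right; apply: Hs'.
by move: Hu; rewrite H0 add0r.
Qed.

Lemma finsuppZ (c : C) g : finsupp g -> finsupp (fun w => c * g w).
Proof.
move=> [s Hs]; exists s => u Hu; apply: Hs; apply: contra Hu => /eqP ->.
by rewrite mulr0.
Qed.

Lemma S00 : in_S0 a (fun _ : Zn n => (0:C)).
Proof. by split; [exact: finsupp0 | move=> u; rewrite eqxx]. Qed.

Lemma S0D g g' : in_S0 a g -> in_S0 a g' -> in_S0 a (fun w => g w + g' w).
Proof.
move=> [f1 H1] [f2 H2]; split; first exact: finsuppD.
move=> u Hu; case: (eqVneq (g u) 0) => [H0|/H1 //]; apply: H2.
by move: Hu; rewrite H0 add0r.
Qed.

Lemma S0Z (c : C) g : in_S0 a g -> in_S0 a (fun w => c * g w).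
Proof.
move=> [f1 H1]; split; first exact: finsuppZ.
move=> u Hu; apply: H1; apply: contra Hu => /eqP ->; by rewrite mulr0.
Qed.

Lemma S0_monom u : in_M R a u -> in_S0 a (monom R u).
Proof.
move=> Hu; split.
  by exists [:: u] => w; rewrite /monom; case: (w =P u) => [-> _|_]; rewrite ?eqxx ?inE.
by move=> w; rewrite /monom; case: (w =P u) => [-> _|_] //; rewrite eqxx.
Qed.

Lemma DS0_ext h h' : (forall u, h u = h' u) -> in_DS0 a l h -> in_DS0 a l h'.
Proof. by move=> E [g [Hg Hh]]; exists g; split=> // u; rewrite -E. Qed.

Lemma DS00 : in_DS0 a l (fun _ : Zn n => (0:C)).
Proof.
exists (fun (_ : 'I_n) (_ : Zn n) => (0:C)); split=> [i|u]; first exact: S00.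
by rewrite big1 // => i _; rewrite D00.
Qed.

Lemma DS0D h h' : in_DS0 a l h -> in_DS0 a l h' -> in_DS0 a l (fun w => h w + h' w).
Proof.
move=> [g [Hg Hh]] [g' [Hg' Hh']].
exists (fun i w => g i w + g' i w); split=> [i|u]; first exact: S0D.
by rewrite Hh Hh' -big_split; apply: eq_bigr => i _; rewrite D0D.
Qed.

Lemma DS0Z (c : C) h : in_DS0 a l h -> in_DS0 a l (fun w => c * h w).
Proof.
move=> [g [Hg Hh]].
exists (fun i w => c * g i w); split=> [i|u]; first exact: S0Z.
by rewrite Hh mulr_sumr; apply: eq_bigr => i _; rewrite D0Z.
Qed.

Definition Span g := exists d : laurent R n, [/\ finsupp d,
  (forall u, d u != 0 -> in_B R a u) & in_DS0 a l (fun w => g w - d w)].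

Lemma Span_ext g g' : (forall u, g u = g' u) -> Span g -> Span g'.
Proof.
move=> E [d [H1 H2 H3]]; exists d; split=> //.
by apply: DS0_ext H3 => u; rewrite E.
Qed.

Lemma Span_DS0 h : in_DS0 a l h -> Span h.
Proof.
move=> Hh; exists (fun _ : Zn n => (0:C)); split; first exact: finsupp0.
  by move=> u; rewrite eqxx.
by apply: DS0_ext Hh => u; rewrite subr0.
Qed.

Lemma SpanD g g' : Span g -> Span g' -> Span (fun w => g w + g' w).
Proof.
move=> [d [H1 H2 H3]] [d' [H1' H2' H3']].
exists (fun w => d w + d' w); split; first exact: finsuppD.
  move=> u Hu; case: (eqVneq (d u) 0) => [H0|/H2 //]; apply: H2'.
  by move: Hu; rewrite H0 add0r.
by apply: DS0_ext (DS0D H3 H3') => u; rewrite opprD addrACA.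
Qed.

Lemma SpanZ (c : C) g : Span g -> Span (fun w => c * g w).
Proof.
move=> [d [H1 H2 H3]]; exists (fun w => c * d w); split; first exact: finsuppZ.
  move=> u Hu; apply: H2; apply: contra Hu => /eqP ->; by rewrite mulr0.
by apply: DS0_ext (DS0Z c H3) => u; rewrite mulrBr.
Qed.

Lemma Span_B u : in_B R a u -> Span (monom R u).
Proof.
move=> Hu; exists (monom R u); split.
- by exists [:: u] => w; rewrite /monom; case: (w =P u) => [-> _|_]; rewrite ?eqxx ?inE.
- by move=> w; rewrite /monom; case: (w =P u) => [-> _|_] //; rewrite eqxx.
by apply: DS0_ext DS00 => w; rewrite subrr.
Qed.


Lemma sum_phi w k :
  \sum_(i < n) (w ord0 i)%:~R * ((pinvmx Am i k)%:C)%C = ((cc w k)%:C)%C :> C.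
Proof.
rewrite /cc mxE rmorph_sum; apply: eq_bigr => i _.
by rewrite rmorphM /= [toR R w 0 i]mxE rmorph_int.
Qed.

Lemma sum_phi2 j k (X M : C) :
  \sum_(i < n) X * (a j ord0 i)%:~R * (((pinvmx Am i k)%:C)%C * M)
  = X * M * ((cc (a j) k)%:C)%C.
Proof.
rewrite -sum_phi mulr_sumr; apply: eq_bigr => i _; ring.
Qed.

Lemma rel_DS0 v k : in_M R a v ->
  in_DS0 a l (fun w => ((cc v k)%:C)%C * monom R v w + (l k)%:R * monom R (v + a k) w).
Proof.
move=> Hv.
exists (fun i w => ((pinvmx Am i k)%:C)%C * monom R v w); split.
  by move=> i; apply: S0Z; apply: S0_monom.
move=> u; rewrite /D0 /euler /mulmon big_split /=; congr (_ + _).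
  rewrite /monom; case: (u =P v) => [->|_]; last first.
    by rewrite mulr0 big1 // => i _; rewrite !mulr0.
  rewrite mulr1; under eq_bigr => i _ do rewrite mulr1.
  by rewrite sum_phi.
rewrite exchange_big /=.
under eq_bigr => j _ do rewrite sum_phi2 cc_a.
rewrite (bigD1 k) //= big1 ?addr0.
  rewrite eqxx mulr1 /monom; congr (_ * _); case: (u - a k =P v) => [<-|H]; first by rewrite subrK eqxx.
  by case: (u =P v + a k) => // E; case: H; rewrite E addrK.
by move=> j Hj; rewrite eq_sym (negbTE Hj) rmorph0 mulr0.
Qed.


Lemma sum_delta k : \sum_(j < m) ((j == k)%:R : R) = 1.
Proof.
rewrite (bigD1 k) //= eqxx big1 ?addr0 // => j /negbTE -> //.
Qed.

Lemma Span_M_K (K : nat) u : in_M R a u -> \sum_k cc u k <= K%:R -> Span (monom R u).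
Proof.
elim: K u => [|K IH] u Hu HK.
all: case: (boolP [forall k, cc u k < 1]) => Hall.
1,3: apply: Span_B; split; first by case: Hu.
1,2: exists (cc u); split; last by apply: in_VZ_cc; case: Hu.
1,2: by move=> j; rewrite in_M_ge0 //=; move/forallP: Hall.
all: move/forallPn: Hall => [k]; rewrite -leNgt => Hk.
all: have Hge := in_M_ge0 Hu.
all: have Hs : 1 <= \sum_k cc u k.
1,3: rewrite (bigD1 k) //=; apply: (le_trans Hk); rewrite lerDl; exact: sumr_ge0.
  by have := le_trans Hs HK; rewrite ler10.
pose v := u - a k.
have Hv : toR R v = rcomb a (fun j => cc u j + - (j == k)%:R).
  by rewrite rcombD rcombN -toR_a -in_VZ_cc ?toRB //; case: Hu.
have Hcv := cc_rcomb Hv.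
have HvM : in_M R a v.
  split; first by exists (fun j => cc u j + - (j == k)%:R).
  exists (fun j => cc u j + - (j == k)%:R); split=> // j.
  case: (eqVneq j k) => [->|_]; last by rewrite subr0.
  by rewrite subr_ge0.
have := IH v HvM.
have -> : \sum_k0 cc v k0 = \sum_k0 cc u k0 - 1.
  by rewrite -(sum_delta k) -sumrB; apply: eq_bigr => j _; rewrite Hcv.
move=> /(_ _) IHv.
have {IHv} Sv : Span (monom R v).
  apply: IHv; move: HK; rewrite -natr1; lra.
have HR := rel_DS0 k HvM.
have Hl0 : (l k)%:R != 0 :> C by rewrite pnatr_eq0 -lt0n hl.
apply: (Span_ext (g := fun w => ((l k)%:R)^-1 * ((((cc v k)%:C)%C * monom R v w
   + (l k)%:R * monom R (v + a k) w) + (- ((cc v k)%:C)%C) * monom R v w))).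
  move=> w; rewrite subrK; field; exact: Hl0.
apply: SpanZ; apply: SpanD; first exact: Span_DS0.
exact: SpanZ.
Qed.

Lemma Span_M u : in_M R a u -> Span (monom R u).
Proof.
move=> Hu; apply: (@Span_M_K (Num.Def.archi_bound (\sum_k cc u k))) => //.
apply: ltW; apply: archi_boundP; apply: sumr_ge0 => k _; exact: in_M_ge0.
Qed.

Lemma sum_monom (d : laurent R n) s u : uniq s ->
  \sum_(b <- s) d b * monom R b u = (u \in s)%:R * d u.
Proof.
elim: s => [|x s IH] /=; first by rewrite big_nil mul0r.
move=> /andP [Hx Hs]; rewrite big_cons IH // inE /monom.
case: (u =P x) => [->|_] /=; last by rewrite mulr0 add0r.
by rewrite (negbTE Hx) mulr1 mul0r addr0 mul1r.
Qed.

Lemma Span_S0 g : in_S0 a g -> Span g.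
Proof.
move=> [[s Hs] HM].
apply: (Span_ext (g := fun w => \sum_(u <- undup s) g u * monom R u w)).
  move=> w; rewrite sum_monom ?undup_uniq // mem_undup.
  case: (boolP (w \in s)) => Hw; first by rewrite mul1r.
  rewrite mul0r; apply/esym/eqP; apply: contraR Hw; exact: Hs.
elim: (undup s) => [|x s' IH].
  by apply: (Span_ext (g := fun _ => 0)); [move=> w; rewrite big_nil | exact: Span_DS0 DS00].
apply: (Span_ext (g := fun w => g x * monom R x w + \sum_(u <- s') g u * monom R u w)).
  by move=> w; rewrite big_cons.
apply: SpanD => //.
case: (eqVneq (g x) 0) => [->|Hx].
  by apply: (Span_ext (g := fun _ => 0)); [move=> w; rewrite mul0r | exact: Span_DS0 DS00].
by apply: SpanZ; apply: Span_M; apply: HM.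
Qed.


Lemma sum_indep (F : Zn n -> C) s1 s2 : uniq s1 -> uniq s2 ->
  (forall u, F u != 0 -> u \in s1) -> (forall u, F u != 0 -> u \in s2) ->
  \sum_(u <- s1) F u = \sum_(u <- s2) F u.
Proof.
move=> U1 U2 H1 H2.
have E : forall s s' : seq (Zn n), (forall u, F u != 0 -> u \in s') ->
    \sum_(u <- s) F u = \sum_(u <- [seq u <- s | u \in s']) F u.
  move=> s s' H; rewrite big_filter [RHS]big_mkcond /=; apply: eq_bigr => u _.
  case: ifP => // Hu; apply/eqP; apply: contraFT Hu; exact: H.
rewrite (E s1 s2) // (E s2 s1) //; apply: perm_big; apply: uniq_perm.
- exact: filter_uniq.
- exact: filter_uniq.
by move=> u; rewrite !mem_filter andbC.
Qed.

Lemma sum_pick (F : Zn n -> C) s b : uniq s ->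
  \sum_(u <- s) F u * (if u == b then 1 else 0) = (b \in s)%:R * F b.
Proof.
elim: s => [|x s IH] /=; first by rewrite big_nil mul0r.
move=> /andP [Hx Hs]; rewrite big_cons IH // inE.
case: (x =P b) => [<-|Hxb] /=; first by rewrite (negbTE Hx) eqxx mulr1 mul0r addr0 mul1r.
by rewrite mulr0 add0r; case: (b =P x) => // E; case: Hxb.
Qed.

Definition fr (t : R) : R := t - (Num.floor t)%:~R.
Definition rho (k : 'I_m) (t : R) : R :=
  \prod_(i < `|Num.floor t|%N) (- (fr t + i%:R) / (l k)%:R).

Lemma floor_add1 (t : R) : Num.floor (t + 1) = Num.floor t + 1.
Proof. by rewrite floorDrz ?rpred1 // floor1. Qed.

Lemma fr_add1 (t : R) : fr (t + 1) = fr t.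
Proof. rewrite /fr floor_add1 rmorphD /=; lra. Qed.

Lemma rho_step k (t : R) : 0 <= t -> rho k (t + 1) = rho k t * (- t / (l k)%:R).
Proof.
move=> Ht; have [N HN] : exists N : nat, Num.floor t = N%:Z.
  by exists `|Num.floor t|%N; rewrite gez0_abs // floor_ge0.
rewrite /rho fr_add1 floor_add1 HN.
have -> : (N%:Z + 1) = (N.+1)%:Z by rewrite -addn1 PoszD.
rewrite big_ord_recr /=; congr (_ * (- _ / _)).
by rewrite /fr HN subrK.
Qed.

Lemma floor01 (t : R) : 0 <= t < 1 -> Num.floor t = 0.
Proof. by move=> H; apply: floor_def; rewrite add0r. Qed.

Lemma rho_01 k (t : R) : 0 <= t < 1 -> rho k t = 1.
Proof. by move=> H; rewrite /rho floor01 // big_ord0. Qed.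

Lemma fr_01 (t : R) : 0 <= t < 1 -> fr t = t.
Proof. by move=> H; rewrite /fr floor01 // subr0. Qed.

Section WithB.
Variable b : Zn n.

Definition Kw u : C :=
  if [forall k, fr (cc u k) == cc b k] then ((\prod_k rho k (cc u k))%:C)%C else 0.

Lemma cc_add v j : in_VZ R a v -> forall k, cc (v + a j) k = cc v k + (k == j)%:R.
Proof.
move=> Hv; apply: cc_rcomb; by rewrite rcombD toRD -toR_a -in_VZ_cc.
Qed.

Lemma Kw_step v j : in_M R a v ->
  Kw (v + a j) = Kw v * ((- cc v j / (l j)%:R)%:C)%C.
Proof.
move=> Hv; have Hc := cc_add j (proj1 Hv).
have Hge := in_M_ge0 Hv.
rewrite /Kw.
have -> : [forall k, fr (cc (v + a j) k) == cc b k] = [forall k, fr (cc v k) == cc b k].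
  apply: eq_forallb => k; rewrite Hc; case: (k == j) => //=; first by rewrite fr_add1.
  by rewrite addr0.
case: ifP => _; last by rewrite mul0r.
rewrite -rmorphM /=; congr (_%:C)%C.
rewrite (bigD1 j) //= (bigD1 j (P := predT)) //= Hc eqxx rho_step //.
rewrite mulrAC; congr (_ * _ * _); apply: eq_bigr => k /negbTE Hk.
by rewrite Hc Hk addr0.
Qed.

Lemma coord_i v i : in_VZ R a v ->
  (v ord0 i)%:~R = \sum_j cc v j * (a j ord0 i)%:~R :> R.
Proof.
move=> Hv; have := congr1 (fun M : 'rV[R]_n => M 0 i) (in_VZ_cc Hv).
rewrite /rcomb summxE mxE => ->; apply: eq_bigr => j _; by rewrite !mxE.
Qed.

Lemma bracket v i : in_M R a v ->
  (v ord0 i)%:~R * Kw v + \sum_(j < m) ((l j)%:R * (a j ord0 i)%:~R) * Kw (v + a j) = 0.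
Proof.
move=> Hv.
under eq_bigr => j _ do rewrite Kw_step // mulrCA.
rewrite -mulr_sumr mulrC -mulrDr.
have HR : \sum_(j < m) (l j)%:R * (a j ord0 i)%:~R * (- cc v j / (l j)%:R)
    = - (v ord0 i)%:~R :> R.
  rewrite (coord_i i (proj1 Hv)) -sumrN; apply: eq_bigr => j _.
  have Hl0 : (l j)%:R != 0 :> R by rewrite pnatr_eq0 -lt0n hl.
  field; exact: Hl0.
have := congr1 (real_complex R) HR; rewrite rmorphN rmorph_sum /= => HC.
rewrite [X in _ * (_ + X)](_ : _ = \sum_(j < m) ((l j)%:R * (a j ord0 i)%:~R * (- cc v j / (l j)%:R))%:C%C).
  by rewrite HC rmorph_int addrN mulr0.
apply: eq_bigr => j _; rewrite [in RHS]rmorphM /= [in RHS]rmorphM /=.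
by rewrite rmorph_nat rmorph_int.
Qed.


Lemma ccB w : in_B R a w -> forall k, 0 <= cc w k < 1.
Proof. by move=> [_ [c [Hc Hw]]] k; rewrite (cc_rcomb Hw); exact: Hc. Qed.

Lemma Kw_B u : in_B R a u -> in_B R a b -> Kw u = if u == b then 1 else 0.
Proof.
move=> Hu Hb; rewrite /Kw.
case: (u =P b) => [->|Hne].
  have -> : [forall k, fr (cc b k) == cc b k] by apply/forallP => k; rewrite fr_01 ?ccB.
  by rewrite big1 ?rmorph1 // => k _; rewrite rho_01 ?ccB.
case: ifP => // /forallP H; case: Hne; apply: toR_inj.
rewrite (in_VZ_cc (proj1 Hu)) (in_VZ_cc (proj1 Hb)) /rcomb; apply: eq_bigr => k _.
by have := H k; rewrite fr_01 ?ccB // => /eqP ->.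
Qed.

Lemma Lam_D0 i g (T T' : seq (Zn n)) : in_S0 a g -> uniq T -> uniq T' ->
  (forall u, g u != 0 -> u \in T) -> {subset T <= T'} ->
  (forall u j, u \in T -> u + a j \in T') ->
  \sum_(u <- T') D0 a l i g u * Kw u = 0.
Proof.
move=> [_ HM] UT UT' HT sub1 sub2.
have HT0 u : u \notin T -> g u = 0.
  by move=> Hu; apply/eqP; apply: contraR Hu; exact: HT.
rewrite /D0 /euler /mulmon.
under eq_bigr => u _ do rewrite mulrDl mulr_suml.
rewrite big_split /= exchange_big /=.
rewrite (@sum_indep (fun u => (u ord0 i)%:~R * g u * Kw u) T' T) //; first last.
- by move=> u; apply: contraR => Hu; rewrite HT0 ?mulr0 ?mul0r.
- by move=> u; apply: contraR => Hu; rewrite HT0 ?mulr0 ?mul0r //; apply: contra Hu; exact: sub1.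
have Hsh j : \sum_(u <- T') (l j)%:R * (a j ord0 i)%:~R * g (u - a j) * Kw u
    = \sum_(v <- T) (l j)%:R * (a j ord0 i)%:~R * g v * Kw (v + a j).
  have Hsup u : (l j)%:R * (a j ord0 i)%:~R * g (u - a j) * Kw u != 0 -> u - a j \in T.
    by move=> Hu; apply: HT; apply: contra Hu => /eqP ->; rewrite mulr0 mul0r.
  have Um : uniq [seq v + a j | v <- T] by rewrite map_inj_uniq //; exact: addIr.
  rewrite (@sum_indep (fun u => (l j)%:R * (a j ord0 i)%:~R * g (u - a j) * Kw u)
     T' [seq v + a j | v <- T] UT' Um).
  - by rewrite big_map; apply: eq_bigr => v _; rewrite addrK.
  - by move=> u /Hsup Hu; have := sub2 _ j Hu; rewrite subrK.
  - by move=> u /Hsup Hu; apply/mapP; exists (u - a j); last by rewrite subrK.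
under eq_bigr => j _ do rewrite Hsh.
rewrite exchange_big -big_split /= big1_seq // => v _.
case: (eqVneq (g v) 0) => [->|Hgv].
  by rewrite mulr0 mul0r add0r big1 // => j _; rewrite mulr0 mul0r.
have Hb := bracket i (HM v Hgv).
transitivity (g v * ((v ord0 i)%:~R * Kw v +
   \sum_(j < m) ((l j)%:R * (a j ord0 i)%:~R) * Kw (v + a j))); last by rewrite Hb mulr0.
rewrite mulrDr mulr_sumr; congr (_ + _); first ring.
by apply: eq_bigr => j _; ring.
Qed.

End WithB.
Lemma main_sec : XB_basis_of_W0 R a l.
Proof.
split.
- move=> b Hb; apply: S0_monom; case: Hb => HV [c [Hc Hu]]; split=> //.
  exists c; split=> [j|//]; by case/andP: (Hc j).
- move=> g Hg; have [d [[s0 Hs0] HdB HDS]] := Span_S0 Hg.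
  exists [seq u <- undup s0 | d u != 0], d; split.
    by move=> u; rewrite mem_filter => /andP [H _]; exact: HdB.
  apply: DS0_ext HDS => u; congr (_ - _).
  rewrite /lincomb sum_monom ?filter_uniq ?undup_uniq // mem_filter mem_undup.
  case: (eqVneq (d u) 0) => [->|Hu]; first by rewrite mulr0.
  by rewrite (Hs0 _ Hu) mul1r.
move=> s c Us HsB [g [Hg Hh]] b Hbs.
have [T0 HT0] : exists T0 : seq (Zn n), forall i u, g i u != 0 -> u \in T0.
  suff: forall r : seq 'I_n, exists T0 : seq (Zn n), forall i, i \in r -> forall u, g i u != 0 -> u \in T0.
    by case/(_ (enum 'I_n)) => T0 H; exists T0 => i u; apply: H; rewrite mem_enum.
  elim=> [|x r [T1 H1]]; first by exists [::].
  have [[Tx Hx] _] := Hg x.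
  exists (Tx ++ T1) => i; rewrite inE => /orP [/eqP ->|Hi] u Hu; rewrite mem_cat.
    by rewrite Hx.
  by rewrite (H1 i Hi u Hu) orbT.
pose T := undup (s ++ T0).
pose T' := undup (T ++ flatten [seq [seq v + a j | v <- T] | j <- enum 'I_m]).
have UT : uniq T by exact: undup_uniq.
have UT' : uniq T' by exact: undup_uniq.
have sub1 : {subset T <= T'} by move=> u Hu; rewrite mem_undup mem_cat Hu.
have sub2 : forall u j, u \in T -> u + a j \in T'.
  move=> u j Hu; rewrite mem_undup mem_cat; apply/orP; right.
  apply/flattenP; exists [seq v + a j | v <- T]; first by apply/mapP; exists j; rewrite ?mem_enum.
  by apply/mapP; exists u.
have E1 : \sum_(u <- T') lincomb s c u * Kw b u = c b.
  under eq_bigr => u _ do rewrite /lincomb sum_monom //.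
  rewrite (@sum_indep (fun u => (u \in s)%:R * c u * Kw b u) T' s UT' Us).
  - rewrite (eq_big_seq (fun u => c u * (if u == b then 1 else 0))).
      by rewrite sum_pick // Hbs mul1r.
    by intros u Hu; rewrite /= Hu mul1r (Kw_B (HsB _ Hu) (HsB _ Hbs)).
  - move=> u; case: (boolP (u \in s)) => Hu; last by rewrite !mul0r eqxx.
    by move=> _; apply: sub1; rewrite mem_undup mem_cat Hu.
  - by move=> u; case: (boolP (u \in s)) => Hu; last by rewrite !mul0r eqxx.
have E2 : \sum_(u <- T') lincomb s c u * Kw b u = 0.
  under eq_bigr => u _ do rewrite Hh mulr_suml.
  rewrite exchange_big big1 // => i _; apply: (Lam_D0 b i (Hg i) UT UT') => //.
  move=> u Hu; rewrite mem_undup mem_cat; apply/orP; right; exact: HT0 Hu.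
by rewrite -E1 E2.
Qed.

End Main.

Theorem proposition3p9 (R : realType) (n m : nat) (a : 'I_m -> Zn n)
    (a0 : Zn n) (l : 'I_m -> nat) (l0 : nat)
    (hA : lin_indep_R R a)
    (hl : forall j, (0 < l j)%N)
    (hl0 : l0 = (\sum_(j < m) l j)%N)
    (hrel : a0 *+ l0 = \sum_(j < m) a j *+ l j)
    (hgcd : gcdn l0 (\big[gcdn/0%N]_(j < m) l j) = 1%N) :
  XB_basis_of_W0 R a l.
Proof. exact: main_sec. Qed.
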